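(* Fix a string $x\in\{0,1\}^*$. Then $\mu_x(\varepsilon)=\rho(x)$, where $\varepsilon$ is the empty string, and for all nonempty strings $w=xy\in\{0,1\}^*$, \[ \mu_x(y1)=\mu_x(y)+1,\qquad \mu_x(y0)=\begin{cases}0&\text{if }\rho(xy)>\mu_x(y)=0,\\ \mu_x(y)-1&\text{otherwise.}\end{cases} \] Additionally, there exists a closed fork $F\vdash xy$ such that $\rho(F)=\rho(xy)$ and $\mu_x(F)=\mu_x(y)$.
   Context: Characteristic strings and forks. A characteristic string is $w=w_1\dots w_n\in\{0,1\}^n$; index $i$ is honest if $w_i=0$ and adversarial if $w_i=1$. A fork for $w$ is a rooted tree with edges directed away from the root $r$ and labeling $\ell:V\to\{0,\dots,n\}$ with (F1) $\ell(r)=0$; (F2) labels strictly increasing along directed paths; (F3) each honest index labels exactly one vertex; (F4) for honest $i<j$ the vertex labeled $i$ has strictly smaller depth than the vertex labeled $j$. Write $F\vdash w$. A vertex is honest if it is the root or labeled by an honest index. A tine is a directed path from the root; its length is its number of edges, $\ell(t)$ the label of its last vertex. A fork is closed if every leaf is honest (the single-vertex fork is closed); a closed fork has a unique longest tine $\hat t$. For closed $F\vdash w$ and tine $t$: $\mathrm{gap}(t)=\mathrm{length}(\hat t)-\mathrm{length}(t)$, $\mathrm{reserve}(t)=|\{i:w_i=1,\ i>\ell(t)\}|$, $\mathrm{reach}(t)=\mathrm{reserve}(t)-\mathrm{gap}(t)$; $\rho(F)=\max_t\mathrm{reach}(t)$ and $\rho(w)=\max\{\rho(F):F\vdash w\text{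 closed}\}$. For $w=xy$, tines $t_1,t_2$ are disjoint over $y$ if they share no edge terminating at a vertex whose label is an index of $y$ (label $>|x|$); a tine may be paired with itself. $\mu_x(F)=\max\min\{\mathrm{reach}(t_1),\mathrm{reach}(t_2)\}$ over pairs disjoint over $y$, and $\mu_x(y)=\max\{\mu_x(F):F\vdash xy\text{ closed}\}$. *)

(* Defs.v *)
From Stdlib Require Import ClassicalEpsilon.
From mathcomp Require Import all_boot all_order all_algebra.
Set Implicit Arguments. Unset Strict Implicit. Unset Printing Implicit Defensive.
Import Order.TTheory GRing.Theory Num.Theory.

(* Characteristic strings: seq bool, with true = 1 (adversarial),
   false = 0 (honest).  Index i (1 <= i <= size w) refers to nth false w i.-1. *)
Definition charstring := seq bool.

Definition adv_idx (w : charstring) (i : nat) : bool :=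
  (0 < i <= size w) && nth false w i.-1.
Definition honest_idx (w : charstring) (i : nat) : bool :=
  (0 < i <= size w) && ~~ nth false w i.-1.

(* Maximum of a set of integers (the element r of P with s <= r for all s in P);
   chosen by classical description; all uses below are of nonempty sets that
   are bounded above, so the maximum exists. *)
Definition imax (P : int -> Prop) : int :=
  epsilon (inhabits 0%Z) (fun r => P r /\ forall s, P s -> (s <= r)%R).

(* Vertices are 0..fsize,
   the root is 0, fpar v is the parent of the vertex v (v >= 1), and flab is
   the labelling.  Every finite rooted tree can be numbered so that parents
   precede children (fpar v < v), which is required in [is_fork]. *)
Record fork := Fork { fsize : nat; fpar : nat -> nat; flab : nat -> nat }.

Definition vertices (F : fork) : seq nat := iota 0 (fsize F).+1.

(* the vertex list of the tine (root path) ending at v, from v to the root *)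
Fixpoint tine_aux (F : fork) (fuel v : nat) : seq nat :=
  match fuel with
  | 0 => [:: v]
  | f.+1 => if v == 0 then [:: 0] else v :: tine_aux F f (fpar F v)
  end.
Definition tine (F : fork) (v : nat) : seq nat := tine_aux F v v.

Definition depth (F : fork) (v : nat) : nat := (size (tine F v)).-1.

Definition honest_vertex (w : charstring) (F : fork) (v : nat) : bool :=
  (v == 0) || honest_idx w (flab F v).

Definition is_fork (w : charstring) (F : fork) : Prop :=
  (forall v, 0 < v <= fsize F -> fpar F v < v) /\
  [/\       flab F 0 = 0,
      (forall v, 0 < v <= fsize F -> flab F (fpar F v) < flab F v),
      (forall v, v <= fsize F -> flab F v <= size w),
      (forall i, honest_idx w i ->
          count (fun v => flab F v == i) (vertices F) = 1)
    & (forall u v, u <= fsize F -> v <= fsize F ->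
          honest_idx w (flab F u) -> honest_idx w (flab F v) ->
          flab F u < flab F v -> depth F u < depth F v)
  ].

Definition is_leaf (F : fork) (v : nat) : bool :=
  ~~ has (fun u => (0 < u) && (fpar F u == v)) (vertices F).

Definition closed_fork (w : charstring) (F : fork) : Prop :=
  is_fork w F /\
  (forall v, v <= fsize F -> is_leaf F v -> honest_vertex w F v).

Definition height (F : fork) : nat := \max_(v <- vertices F) depth F v.

Definition gap (F : fork) (v : nat) : nat := height F - depth F v.
Definition reserve (w : charstring) (F : fork) (v : nat) : nat :=
  count (fun i => adv_idx w i && (flab F v < i)) (iota 1 (size w)).
Definition reach (w : charstring) (F : fork) (v : nat) : int :=
  ((reserve w F v)%:Z - (gap F v)%:Z)%R.

Definition rho_fork (w : charstring) (F : fork) : int :=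
  imax (fun r => exists2 v, v <= fsize F & r = reach w F v).

Definition rho (w : charstring) : int :=
  imax (fun r => exists2 F, closed_fork w F & r = rho_fork w F).

(* tines ending at v1, v2 are disjoint over y (w = x y, k = |x|):
   they share no edge terminating at a vertex with label > k. *)
Definition disjoint_over (k : nat) (F : fork) (v1 v2 : nat) : bool :=
  ~~ has (fun u => (u != 0) && (k < flab F u) && (u \in tine F v2)) (tine F v1).

Definition mu_fork (x y : charstring) (F : fork) : int :=
  imax (fun r => exists v1 v2, [/\ v1 <= fsize F, v2 <= fsize F,
          disjoint_over (size x) F v1 v2 &
          r = Order.min (reach (x ++ y) F v1) (reach (x ++ y) F v2)]).

Definition mu (x y : charstring) : int :=
  imax (fun r => exists2 F, closed_fork (x ++ y) F & r = mu_fork x y F).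

(* Main.v *)
Require Import Defs.
From Stdlib Require Import ClassicalEpsilon.
From mathcomp Require Import all_boot all_order all_algebra zify.
Import Order.TTheory GRing.Theory Num.Theory.
Set Implicit Arguments. Unset Strict Implicit. Unset Printing Implicit Defensive.

Lemma int_max_exists (P : int -> Prop) r0 B :
  P r0 -> (forall s, P s -> (s <= B)%R) ->
  exists r, P r /\ forall s, P s -> (s <= r)%R.
Proof.
move=> Pr0 HB.
suff: forall n r, P r -> (`|B - r|%N <= n)%N ->
  exists r, P r /\ forall s, P s -> (s <= r)%R by move/(_ _ r0 Pr0 (leqnn _)).
elim=> [|n IH] r Pr Hn.
- exists r; split=> // s Ps. have := HB _ Ps. have := HB _ Pr. lia.
- case: (classic (exists s, P s /\ (r < s)%R)) => [[s [Ps lt]]|nex].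
  + apply: (IH s Ps). have := HB _ Ps. lia.
  + exists r; split=> // s Ps. case: (lerP s r) => // lt. by exfalso; apply: nex; exists s.
Qed.

Lemma imax_spec (P : int -> Prop) r0 B :
  P r0 -> (forall s, P s -> (s <= B)%R) ->
  P (imax P) /\ forall s, P s -> (s <= imax P)%R.
Proof.
move=> Pr0 HB; rewrite /imax.
exact: (epsilon_spec (inhabits 0%Z) (fun r => P r /\ forall s, P s -> (s <= r)%R) (int_max_exists Pr0 HB)).
Qed.

Lemma imax_eq (P : int -> Prop) r :
  P r -> (forall s, P s -> (s <= r)%R) -> imax P = r.
Proof.
move=> Pr Hr; have [Pm Hm] := imax_spec Pr Hr.
apply/eqP; rewrite eq_le; apply/andP; split; [exact: Hr|exact: Hm].
Qed.

Section Tines.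
Variable F : fork.

Definition wfv (v : nat) := forall u, 0 < u <= v -> fpar F u < u.

Lemma tine_aux_fuel f g v : wfv v -> v <= f -> v <= g -> tine_aux F f v = tine_aux F g v.
Proof.
elim: f g v => [|f IH] g v wv hf hg.
  move: hf; rewrite leqn0 => /eqP->; by case: g hg.
case: g hg => [|g] hg.
  by move: hg; rewrite leqn0 => /eqP->.
rewrite /=; case: eqP => // /eqP v0.
have pv : fpar F v < v by apply: wv; rewrite lt0n v0 leqnn.
congr cons; apply: IH.
- move=> u /andP[u0 uv]; apply: wv; rewrite u0 /=; exact: ltnW (leq_ltn_trans uv pv).
- lia.
- lia.
Qed.

Lemma tine0 : tine F 0 = [:: 0].
Proof. by []. Qed.

Lemma tineS v : 0 < v -> wfv v -> tine F v = v :: tine F (fpar F v).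
Proof.
case: v => // v _ wv; rewrite /tine /=.
have pv : fpar F v.+1 < v.+1 by apply: wv; rewrite leqnn.
congr cons; apply: tine_aux_fuel => //.
move=> u /andP[u0 uv]; apply: wv; rewrite u0 /=; exact: ltnW (leq_ltn_trans uv pv).
Qed.

Lemma mem_tineS v u : 0 < v -> wfv v ->
  (u \in tine F v) = (u == v) || (u \in tine F (fpar F v)).
Proof. by move=> v0 wv; rewrite tineS // in_cons. Qed.

Lemma wfv_le u v : wfv v -> u <= v -> wfv u.
Proof. move=> wv uv x /andP[x0 xu]; apply: wv; rewrite x0 /=; exact: leq_trans xu uv. Qed.

Lemma wfv_par v : 0 < v -> wfv v -> wfv (fpar F v).
Proof. move=> v0 wv; have pv : fpar F v < v by apply: wv; rewrite v0 leqnn.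
exact: (wfv_le wv (ltnW pv)). Qed.

Lemma depthS v : 0 < v -> wfv v -> depth F v = (depth F (fpar F v)).+1.
Proof.
move=> v0 wv; rewrite /depth tineS //=.
have: 0 < size (tine F (fpar F v)).
  rewrite /tine; by case: (fpar F v) => //= n; case: ifP.
by case: (size _).
Qed.

Lemma depth0 : depth F 0 = 0. Proof. by []. Qed.

Lemma mem_tine_self v : wfv v -> v \in tine F v.
Proof. case: v => [|v] wv; first by []. by rewrite tineS // in_cons eqxx. Qed.

Lemma mem_tine_le v u : wfv v -> u \in tine F v -> u <= v.
Proof.
elim/ltn_ind: v => v IH wv; case: (posnP v) => [->|v0]; first by rewrite tine0 inE => /eqP->.
rewrite tineS // in_cons => /orP[/eqP->//|]. 
have pv : fpar F v < v by apply: wv; rewrite v0 leqnn.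
move/(IH _ pv (wfv_par v0 wv)) => h; exact: ltnW (leq_ltn_trans h pv).
Qed.

Lemma mem_tine0 v : wfv v -> 0 \in tine F v.
Proof.
elim/ltn_ind: v => v IH wv; case: (posnP v) => [->|v0]; first by [].
have pv : fpar F v < v by apply: wv; rewrite v0 leqnn.
by rewrite tineS // in_cons (IH _ pv (wfv_par v0 wv)) orbT.
Qed.

Lemma tine_trans v u x : wfv v -> u \in tine F v -> x \in tine F u -> x \in tine F v.
Proof.
elim/ltn_ind: v => v IH wv; case: (posnP v) => [->|v0]; first by rewrite tine0 inE => /eqP->.
have pv : fpar F v < v by apply: wv; rewrite v0 leqnn.
move=> uin xin; move: uin; rewrite [tine F v]tineS // in_cons => /orP[/eqP ?|uin].
  by subst u; rewrite -tineS.
by rewrite in_cons (IH _ pv (wfv_par v0 wv) uin xin) orbT.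
Qed.

Lemma tine_prefix v a b : wfv v -> a \in tine F v -> b \in tine F v ->
  a \in tine F b \/ b \in tine F a.
Proof.
elim/ltn_ind: v => v IH wv; case: (posnP v) => [->|v0].
  by rewrite tine0 !inE => /eqP-> /eqP->; left.
have pv : fpar F v < v by apply: wv; rewrite v0 leqnn.
rewrite (mem_tineS a v0 wv) (mem_tineS b v0 wv) => /orP[/eqP->|ha] /orP[/eqP->|hb].
- by left; apply: mem_tine_self.
- by right; rewrite (mem_tineS b v0 wv) hb orbT.
- by left; rewrite (mem_tineS a v0 wv) ha orbT.
- exact: (IH _ pv (wfv_par v0 wv)).
Qed.

Lemma tine_child v u : wfv u -> v \in tine F u -> v != u ->
  exists c, [/\ c \in tine F u, 0 < c & fpar F c = v].
Proof.
elim/ltn_ind: u => u IH wu; case: (posnP u) => [->|u0].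
  by rewrite tine0 inE => ->.
have pu : fpar F u < u by apply: wu; rewrite u0 leqnn.
rewrite mem_tineS // => /orP[/eqP->|vin]; first by rewrite eqxx.
move=> _; case: (eqVneq v (fpar F u)) => [->|vne].
  by exists u; rewrite tineS // in_cons eqxx.
have [c [cin c0 pc]] := IH _ pu (wfv_par u0 wu) vin vne.
by exists c; split=> //; rewrite tineS // in_cons cin orbT.
Qed.

Lemma depth_tine v u : wfv v -> u \in tine F v -> depth F u <= depth F v ?= iff (u == v).
Proof.
elim/ltn_ind: v => v IH wv; case: (posnP v) => [->|v0].
  by rewrite tine0 inE => /eqP->; rewrite eqxx; apply/leqifP.
have pv : fpar F v < v by apply: wv; rewrite v0 leqnn.
rewrite mem_tineS // => /orP[/eqP->|uin]; first by rewrite eqxx; apply/leqifP.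
have [le _] := IH _ pv (wfv_par v0 wv) uin.
have uv : u < v by exact: leq_ltn_trans (mem_tine_le (wfv_par v0 wv) uin) pv.
rewrite (ltn_eqF uv); apply/leqifP; rewrite (depthS v0 wv); exact: le.
Qed.

End Tines.
Lemma mem_vertices F v : (v \in vertices F) = (v <= fsize F).
Proof. by rewrite /vertices mem_iota add0n ltnS. Qed.

Lemma fork_wfv w G v : is_fork w G -> v <= fsize G -> wfv G v.
Proof. move=> [wf _] vn u /andP[u0 uv]; apply: wf; rewrite u0 /=; exact: leq_trans uv vn. Qed.

Lemma fork_par_lt w G v : is_fork w G -> 0 < v <= fsize G -> fpar G v < v.
Proof. by move=> [wf _]; apply: wf. Qed.

Lemma tine_le_fsize w G v u : is_fork w G -> v <= fsize G -> u \in tine G v -> u <= fsize G.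
Proof. move=> fG vn uin; exact: leq_trans (mem_tine_le (fork_wfv fG vn) uin) vn. Qed.

Lemma lab_tine w G v u : is_fork w G -> v <= fsize G -> u \in tine G v -> u != v ->
  flab G u < flab G v.
Proof.
move=> fG; elim/ltn_ind: v => v IH vn.
have wv := fork_wfv fG vn.
case: (posnP v) => [->|v0]; first by rewrite tine0 inE => ->.
have pv : fpar G v < v by apply: (fork_par_lt fG); rewrite v0 vn.
have [_ [_ F2 _ _ _]] := fG.
have lpv : flab G (fpar G v) < flab G v by apply: F2; rewrite v0 vn.
rewrite (mem_tineS u v0 wv) => /orP[/eqP->|uin]; first by rewrite eqxx.
move=> _; case: (eqVneq u (fpar G v)) => [->//|une].
have := IH _ pv (ltnW (leq_trans pv vn)) uin une. lia.
Qed.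

Lemma lab_tine_le w G v u : is_fork w G -> v <= fsize G -> u \in tine G v ->
  flab G u <= flab G v.
Proof.
move=> fG vn uin; case: (eqVneq u v) => [->//|une].
exact: ltnW (lab_tine fG vn uin une).
Qed.

Lemma lab_pos w G v : is_fork w G -> 0 < v <= fsize G -> 0 < flab G v.
Proof.
move=> fG /andP[v0 vn]; have [_ [F1 _ _ _ _]] := fG.
rewrite -F1; apply: (lab_tine fG vn); last by rewrite eq_sym -lt0n.
exact: (mem_tine0 (fork_wfv fG vn)).
Qed.

Lemma depth_le_height G v : v <= fsize G -> depth G v <= height G.
Proof. by move=> vn; rewrite /height; apply: leq_bigmax_seq; rewrite ?mem_vertices. Qed.

Lemma bigmax_ex (s : seq nat) (f : nat -> nat) : s != [::] ->
  exists2 v, v \in s & \max_(i <- s) f i = f v.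
Proof.
elim: s => // a s IH _; rewrite big_cons.
case: (eqVneq s [::]) => [->|sne].
  by exists a; rewrite ?inE // big_nil maxn0.
have [v vin ->] := IH sne.
case: (leqP (f a) (f v)) => h.
  by exists v; rewrite // inE vin orbT.
by exists a; rewrite // inE eqxx.
Qed.

Lemma height_ex G : exists2 v, v <= fsize G & height G = depth G v.
Proof.
have [v vin e] := @bigmax_ex (vertices G) (depth G) isT.
by exists v; rewrite // -?mem_vertices // /height e.
Qed.

Lemma leaf_below w G v : is_fork w G -> v <= fsize G ->
  exists u, [/\ u <= fsize G, is_leaf G u & v \in tine G u].
Proof.
move=> fG.
move: {2}(fsize G - v) (leqnn (fsize G - v)) => d.
elim: d v => [|d IH] v hd vn.
- have vE : v = fsize G by lia.
  exists v; split=> //; last exact: mem_tine_self (fork_wfv fG vn).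
  apply/hasPn => c; rewrite mem_vertices => cn; apply/negP => /andP[c0 /eqP pc].
  have := @fork_par_lt w G c fG. rewrite c0 cn pc => /(_ isT). lia.
- case lf: (is_leaf G v).
    by exists v; split=> //; exact: mem_tine_self (fork_wfv fG vn).
  move: lf; rewrite /is_leaf => /negbFE /hasP [c]; rewrite mem_vertices => cn /andP[c0 /eqP pc].
  have cv : v < c by rewrite -pc; apply: (fork_par_lt fG); rewrite c0 cn.
  have [u [un lu cin]] := IH c (ltac:(lia)) cn.
  exists u; split=> //; apply: (tine_trans (fork_wfv fG un) cin).
  by rewrite (mem_tineS _ c0 (fork_wfv fG cn)) pc (mem_tine_self (fork_wfv fG vn)) orbT.
Qed.

Lemma reserve_le w G v : reserve w G v <= size w.
Proof. by rewrite /reserve; apply: leq_trans (count_size _ _) _; rewrite size_iota. Qed.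

Lemma reach_le w G v : (reach w G v <= (Posz (size w)))%R.
Proof. have := reserve_le w G v; rewrite /reach; lia. Qed.

Lemma rho_fork_spec w G :
  (forall v, v <= fsize G -> (reach w G v <= rho_fork w G)%R) /\
  exists2 v, v <= fsize G & rho_fork w G = reach w G v.
Proof.
have hb : forall s, (exists2 v, v <= fsize G & s = reach w G v) -> (s <= Posz (size w))%R.
  by move=> s [v _ ->]; exact: reach_le.
have [[v vn e] H] := @imax_spec (fun r => exists2 v, v <= fsize G & r = reach w G v)
   (reach w G 0) (Posz (size w)) (ex_intro2 _ _ 0 (leq0n _) erefl) hb.
split; last by exists v => //; exact: e.
by move=> u un; apply: H; exists u.
Qed.

Definition muk (k : nat) (w : charstring) (F : fork) : int :=
  imax (fun r => exists v1 v2, [/\ v1 <= fsize F, v2 <= fsize F,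
          disjoint_over k F v1 v2 &
          r = Order.min (reach w F v1) (reach w F v2)]).

Lemma mu_forkE x y F : mu_fork x y F = muk (size x) (x ++ y) F.
Proof. by []. Qed.

Lemma disjoint00 k G : disjoint_over k G 0 0.
Proof. by []. Qed.

Lemma muk_spec k w G :
  (forall v1 v2, v1 <= fsize G -> v2 <= fsize G -> disjoint_over k G v1 v2 ->
     (Order.min (reach w G v1) (reach w G v2) <= muk k w G)%R) /\
  exists v1 v2, [/\ v1 <= fsize G, v2 <= fsize G, disjoint_over k G v1 v2 &
     muk k w G = Order.min (reach w G v1) (reach w G v2)].
Proof.
have hb : forall s, (exists v1 v2, [/\ v1 <= fsize G, v2 <= fsize G,
          disjoint_over k G v1 v2 &
          s = Order.min (reach w G v1) (reach w G v2)]) -> (s <= Posz (size w))%R.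
  move=> s [v1 [v2 [_ _ _ ->]]]. have := reach_le w G v1. lia.
have [[v1 [v2 [h1 h2 h3 e]]] H] := @imax_spec
  (fun r => exists v1 v2, [/\ v1 <= fsize G, v2 <= fsize G,
          disjoint_over k G v1 v2 &
          r = Order.min (reach w G v1) (reach w G v2)])
   (Order.min (reach w G 0) (reach w G 0)) (Posz (size w))
   (ex_intro _ 0 (ex_intro _ 0 (And4 (leq0n _) (leq0n _) (disjoint00 k G) erefl))) hb.
split; last by exists v1, v2; split => //; exact: e.
by move=> u1 u2 hu1 hu2 hu3; apply: H; exists u1, u2.
Qed.

Lemma disjointP k G a b :
  reflect (forall u, u \in tine G a -> u \in tine G b -> u != 0 -> flab G u <= k)
          (disjoint_over k G a b).
Proof.
apply: (iffP hasPn) => H u ua.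
- move=> ub u0; have := H u ua; rewrite u0 ub /= andbT; lia.
- apply/negP => /andP[/andP[u0 lk] ub]; have := H u ua ub u0; lia.
Qed.

Lemma disjoint_sym k G a b : disjoint_over k G a b = disjoint_over k G b a.
Proof.
apply/disjointP/disjointP => H u h1 h2; exact: H.
Qed.

Lemma disjoint_sub k G a a' b : {subset tine G a' <= tine G a} ->
  disjoint_over k G a b -> disjoint_over k G a' b.
Proof. move=> sub /disjointP H; apply/disjointP => u h1 h2; apply: H => //; exact: sub. Qed.

Lemma rho_spec w G0 : closed_fork w G0 ->
  (forall G, closed_fork w G -> (rho_fork w G <= rho w)%R) /\
  exists2 G, closed_fork w G & rho w = rho_fork w G.
Proof.
move=> cG0.
have hb : forall s, (exists2 F, closed_fork w F & s = rho_fork w F) -> (s <= Posz (size w))%R.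
  move=> s [F _ ->]; have [_ [v _ ->]] := rho_fork_spec w F; exact: reach_le.
have [[G cG e] H] := @imax_spec (fun r => exists2 F, closed_fork w F & r = rho_fork w F)
   (rho_fork w G0) (Posz (size w)) (ex_intro2 _ _ G0 cG0 erefl) hb.
split; last by exists G => //; exact: e.
by move=> F cF; apply: H; exists F.
Qed.

Lemma mu_spec x y G0 : closed_fork (x ++ y) G0 ->
  (forall G, closed_fork (x ++ y) G -> (mu_fork x y G <= mu x y)%R) /\
  exists2 G, closed_fork (x ++ y) G & mu x y = mu_fork x y G.
Proof.
move=> cG0.
have hb : forall s, (exists2 F, closed_fork (x ++ y) F & s = mu_fork x y F) -> (s <= Posz (size (x ++ y)))%R.
  move=> s [F _ ->]; rewrite mu_forkE; have [_ [v1 [v2 [_ _ _ ->]]]] := muk_spec (size x) (x ++ y) F.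
  have := reach_le (x ++ y) F v1; lia.
have [[G cG e] H] := @imax_spec (fun r => exists2 F, closed_fork (x ++ y) F & r = mu_fork x y F)
   (mu_fork x y G0) (Posz (size (x ++ y))) (ex_intro2 _ _ G0 cG0 erefl) hb.
split; last by exists G => //; exact: e.
by move=> F cF; apply: H; exists F.
Qed.
Lemma nth_rcons_false (w : charstring) b i :
  nth false (rcons w b) i = if i < size w then nth false w i else (i == size w) && b.
Proof.
rewrite nth_rcons; case: ltnP => // _; case: eqP => //.
Qed.

Lemma honest_rcons w b i : i <= size w -> honest_idx (rcons w b) i = honest_idx w i.
Proof.
move=> iw; rewrite /honest_idx size_rcons nth_rcons_false.
case: i iw => [|i] iw //=. by rewrite iw (leq_trans iw (leqnSn _)).
Qed.

Lemma adv_rcons w b i : i <= size w -> adv_idx (rcons w b) i = adv_idx w i.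
Proof.
move=> iw; rewrite /adv_idx size_rcons nth_rcons_false.
case: i iw => [|i] iw //=. by rewrite iw (leq_trans iw (leqnSn _)).
Qed.

Lemma honest_last w b : honest_idx (rcons w b) (size w).+1 = ~~ b.
Proof. by rewrite /honest_idx size_rcons nth_rcons_false /= ltnn eqxx leqnn. Qed.

Lemma adv_last w b : adv_idx (rcons w b) (size w).+1 = b.
Proof. by rewrite /adv_idx size_rcons nth_rcons_false /= ltnn eqxx leqnn. Qed.

Lemma honest_le w i : honest_idx w i -> 0 < i <= size w.
Proof. by case/andP. Qed.

Lemma adv_le w i : adv_idx w i -> 0 < i <= size w.
Proof. by case/andP. Qed.

Lemma honest_rcons_true w i : honest_idx (rcons w true) i = honest_idx w i.
Proof.
case: (leqP i (size w)) => h; first exact: honest_rcons.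
case: (eqVneq i (size w).+1) => [->|ne].
  by rewrite honest_last /honest_idx ltnn andbF.
rewrite /honest_idx size_rcons.
have -> : (i <= (size w).+1) = false by apply/negbTE; lia.
have -> : (i <= (size w)) = false by apply/negbTE; lia.
by rewrite !andbF.
Qed.

Lemma reserve_rcons w b G v : reserve (rcons w b) G v =
  reserve w G v + (b && (flab G v <= size w)).
Proof.
rewrite /reserve size_rcons -(addn1 (size w)) iotaD count_cat /= add1n addn0 adv_last.
congr addn.
apply: eq_in_count => i; rewrite mem_iota => /andP[_ ilt].
by rewrite adv_rcons //; lia.
Qed.

Lemma reach_rcons w b G v : reach (rcons w b) G v =
  (reach w G v + Posz (b && (flab G v <= size w)%N))%R.
Proof. rewrite /reach reserve_rcons; case: (_ && _) => /=; lia. Qed.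

Lemma fork_lab_le w G v : is_fork w G -> v <= fsize G -> flab G v <= size w.
Proof. by move=> [_ [_ _ F _ _]]; apply: F. Qed.

Lemma closed_true w G : closed_fork (rcons w true) G <-> closed_fork w G.
Proof.
split.
- move=> [[wf [F1 F2 Fl F3 F4]] cl].
  have fG : is_fork (rcons w true) G by split.
  have Fl' : forall v, v <= fsize G -> flab G v <= size w.
    move=> v vn; have := Fl v vn; rewrite size_rcons leq_eqVlt ltnS => /orP[/eqP e|//].
    have [u [un lu vin]] := leaf_below fG vn.
    have := lab_tine_le fG un vin; have := Fl u un; rewrite size_rcons e => h1 h2.
    have eu : flab G u = (size w).+1 by apply/eqP; rewrite eqn_leq h1 h2.
    have := cl u un lu; rewrite /honest_vertex eu honest_last orbF => /eqP u0.
    by move: eu; rewrite u0 F1.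
  split; last first.
    move=> v vn lv; have := cl v vn lv; rewrite /honest_vertex honest_rcons //; exact: Fl'.
  split=> //; split=> //.
  + by move=> i hi; apply: F3; rewrite honest_rcons_true.
  + by move=> u v un vn hu hv; apply: F4 => //; rewrite honest_rcons_true.
- move=> [[wf [F1 F2 Fl F3 F4]] cl].
  split; last first.
    move=> v vn lv; have := cl v vn lv; rewrite /honest_vertex honest_rcons //; exact: Fl.
  split=> //; split=> //.
  + by move=> v vn; rewrite size_rcons; apply: leq_trans (Fl v vn) _.
  + by move=> i; rewrite honest_rcons_true; apply: F3.
  + by move=> u v un vn; rewrite !honest_rcons_true; apply: F4.
Qed.

Lemma rho_fork_shift w w' G c :
  (forall v, v <= fsize G -> reach w' G v = (reach w G v + c)%R) ->
  rho_fork w' G = (rho_fork w G + c)%R.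
Proof.
move=> H; have [Hle [v vn e]] := rho_fork_spec w G.
apply: imax_eq; first by exists v; rewrite // H // e.
by move=> s [u un ->]; rewrite H //; have := Hle u un; lia.
Qed.

Lemma muk_shift k w w' G c :
  (forall v, v <= fsize G -> reach w' G v = (reach w G v + c)%R) ->
  muk k w' G = (muk k w G + c)%R.
Proof.
move=> H; have [Hle [v1 [v2 [h1 h2 h3 e]]]] := muk_spec k w G.
apply: imax_eq; first by exists v1, v2; split=> //; rewrite !H // e; lia.
move=> s [u1 [u2 [hu1 hu2 hu3 ->]]]; rewrite !H //; have := Hle u1 u2 hu1 hu2 hu3; lia.
Qed.
Lemma honest_not_adv w i : honest_idx w i -> adv_idx w i -> False.
Proof. by rewrite /honest_idx /adv_idx => /andP[_ /negP h] /andP[_]. Qed.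

Lemma tine_ext_eq G G' v : wfv G v -> (forall u, 0 < u <= v -> fpar G u = fpar G' u) ->
  tine G v = tine G' v.
Proof.
elim/ltn_ind: v => v IH wv hp; case: (posnP v) => [->//|v0].
have wv' : wfv G' v by move=> u hu; rewrite -hp //; exact: wv.
have pv : fpar G v < v by apply: wv; rewrite v0 leqnn.
rewrite (tineS v0 wv) (tineS v0 wv') -hp ?v0 ?leqnn //; congr cons.
apply: IH => //; first exact: wfv_par.
move=> u /andP[u0 uv]; apply: hp; rewrite u0 /=; lia.
Qed.

Definition ext (F : fork) (t m : nat) (labs : nat -> nat) (hl : nat) : fork :=
  Fork (fsize F + m).+1
   (fun v => if v <= fsize F then fpar F v else if v == (fsize F).+1 then t else v.-1)
   (fun v => if v <= fsize F then flab F v else if v == (fsize F + m).+1 then hl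
             else labs (v - fsize F)).

Section Ext.
Variables (w : charstring) (F : fork) (t m : nat) (labs : nat -> nat).
Hypotheses (cF : closed_fork w F) (tN : t <= fsize F)
  (hm : depth F t + m = height F)
  (hl1 : 0 < m -> flab F t < labs 1)
  (hinc : forall j, 0 < j < m -> labs j < labs j.+1)
  (hadv : forall j, 0 < j <= m -> adv_idx w (labs j)).

Let N := fsize F.
Let n := size w.
Let F' := ext F t m labs n.+1.
Let fF : is_fork w F := proj1 cF.

Lemma ext_size : fsize F' = (N + m).+1. Proof. by []. Qed.

Lemma ext_par_old v : v <= N -> fpar F' v = fpar F v.
Proof. by rewrite /= => ->. Qed.
Lemma ext_lab_old v : v <= N -> flab F' v = flab F v.
Proof. by rewrite /= => ->. Qed.
Lemma ext_par_new v : N < v -> fpar F' v = if v == N.+1 then t else v.-1.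
Proof. by move=> h; rewrite /= ifF //; apply/negbTE; rewrite -ltnNge. Qed.
Lemma ext_lab_new v : N < v -> flab F' v = if v == (N + m).+1 then n.+1 else labs (v - N).
Proof. by move=> h; rewrite /= ifF //; apply/negbTE; rewrite -ltnNge. Qed.

Lemma ext_wf v : 0 < v <= fsize F' -> fpar F' v < v.
Proof.
move=> /andP[v0 vn]; case: (leqP v N) => vN.
  rewrite ext_par_old //; apply: (fork_par_lt fF); by rewrite v0.
rewrite ext_par_new //; case: eqP => [->|_]; first by rewrite ltnS.
by rewrite prednK.
Qed.

Lemma ext_wfv v : v <= fsize F' -> wfv F' v.
Proof. move=> vn u /andP[u0 uv]; apply: ext_wf; rewrite u0; exact: leq_trans uv vn. Qed.

Lemma ext_tine_old v : v <= N -> tine F' v = tine F v.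
Proof.
move=> vN; symmetry; apply: tine_ext_eq; first exact: fork_wfv fF vN.
move=> u /andP[_ uv]; rewrite ext_par_old //; exact: leq_trans uv vN.
Qed.

Lemma ext_depth_old v : v <= N -> depth F' v = depth F v.
Proof. by move=> vN; rewrite /depth ext_tine_old. Qed.

Lemma ext_tine_new j : 0 < j <= m.+1 ->
  depth F' (N + j) = depth F t + j /\
  forall u, u \in tine F' (N + j) -> N < u \/ u \in tine F t.
Proof.
elim: j => // j IH /andP[_ jm].
have wv : wfv F' (N + j.+1) by apply: ext_wfv; rewrite ext_size; lia.
have pj : fpar F' (N + j.+1) = if j == 0 then t else N + j.
  rewrite ext_par_new; last lia.
  case: (eqVneq j 0) => [->|j0].
    by rewrite ifT //; apply/eqP; lia.
  rewrite ifF; [lia | apply/negbTE; lia].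
have p0 : 0 < N + j.+1 by lia.
split.
- rewrite (depthS p0 wv) pj; case: (eqVneq j 0) => [->|j0].
  + rewrite ext_depth_old //; lia.
  + have [-> _] := IH (ltac:(lia)); lia.
- move=> u; rewrite (mem_tineS _ p0 wv) => /orP[/eqP->|]; first by left; lia.
  rewrite pj; case: (eqVneq j 0) => [_|j0].
  + by rewrite ext_tine_old //; right.
  + by have [_ H] := IH (ltac:(lia)); apply: H.
Qed.

Lemma ext_lab_le v : v <= fsize F' -> flab F' v <= n.+1.
Proof.
move=> vn; case: (leqP v N) => vN.
  rewrite ext_lab_old //; apply: leq_trans (fork_lab_le fF vN) _; exact: leqnSn.
rewrite ext_lab_new //; case: eqP => // ne.
have := hadv (j := v - N) (ltac:(rewrite ext_size in vn; lia)) => /adv_le. lia.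
Qed.

Lemma ext_honest v : v <= fsize F' -> honest_idx (rcons w false) (flab F' v) ->
  v <= N \/ v = (N + m).+1.
Proof.
move=> vn; case: (leqP v N) => vN; first by left.
rewrite ext_lab_new //; case: eqP => [->|ne]; first by right.
have hj : 0 < v - N <= m by rewrite ext_size in vn; lia.
have := hadv hj => ha; rewrite honest_rcons; last by have := adv_le ha; lia.
by move/honest_not_adv/(_ ha).
Qed.

Lemma ext_depth_h : depth F' (N + m).+1 = (height F).+1.
Proof.
have [e _] := ext_tine_new (j := m.+1) (ltac:(lia)).
have -> : (N + m).+1 = N + m.+1 by lia.
rewrite e; lia.
Qed.

Lemma ext_fork : is_fork (rcons w false) F'.
Proof.
have [_ [F1 F2 Fl F3 F4]] := fF.
split; first exact: ext_wf.
split.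
- by rewrite ext_lab_old.
- move=> v /andP[v0 vn]; case: (leqP v N) => vN.
    rewrite ext_par_old // !ext_lab_old //; first by apply: F2; rewrite v0.
    have := @fork_par_lt w F v fF; rewrite v0 vN => /(_ isT); lia.
  rewrite (ext_lab_new vN) (ext_par_new vN).
  case: (eqVneq v N.+1) => [e|vN1].
    subst v; rewrite (ext_lab_old tN).
    case: (eqVneq N.+1 (N + m).+1) => [e|ne].
      have := fork_lab_le fF tN; lia.
    have -> : N.+1 - N = 1 by lia.
    apply: hl1; lia.
  rewrite ext_lab_new; last lia.
  have -> : (v.-1 == (N + m).+1) = false by apply/negbTE; rewrite ext_size in vn; lia.
  case: (eqVneq v (N + m).+1) => [e|ne].
    have := hadv (j := v.-1 - N) (ltac:(lia)) => /adv_le; lia.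
  have := hinc (j := v.-1 - N) (ltac:(rewrite ext_size in vn; lia)).
  by have -> : (v.-1 - N).+1 = v - N by lia.
- by move=> v vn; rewrite size_rcons; apply: ext_lab_le.
- move=> i hi.
  have -> : vertices F' = iota 0 N.+1 ++ iota N.+1 m.+1.
    rewrite /vertices ext_size (_ : (N + m).+2 = N.+1 + m.+1); last lia.
    by rewrite iotaD.
  rewrite count_cat.
  case: (leqP i n) => iN.
  + have hw : honest_idx w i by rewrite -(honest_rcons false iN).
    rewrite -(F3 i hw) /vertices -/N -[X in _ = X]addn0; congr addn.
      by apply: eq_in_count => v; rewrite mem_iota => /andP[_ vl]; rewrite ext_lab_old //; lia.
    apply/eqP; rewrite -leqn0 leqNgt -has_count; apply/hasPn => v; rewrite mem_iota => /andP[vl vr].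
    rewrite ext_lab_new; last lia.
    case: (eqVneq v (N + m).+1) => [_|ne]; first by apply/negP => /eqP e; move: iN; rewrite -e ltnn.
    have vle : v <= N + m by move/eqP: ne; lia.
    apply/negP => /eqP e; have := hadv (j := v - N) (ltac:(lia)); rewrite e.
    by move/(honest_not_adv hw).
  + have ie : i = n.+1 by have := honest_le hi; rewrite size_rcons; lia.
    subst i.
    have -> : count (fun v => flab F' v == n.+1) (iota 0 N.+1) = 0.
      apply/eqP; rewrite -leqn0 leqNgt -has_count; apply/hasPn => v; rewrite mem_iota => /andP[_ vl].
      rewrite ext_lab_old; last lia.
      by apply/negP => /eqP e; have := fork_lab_le fF (v := v) (ltac:(lia)); rewrite e; lia.
    rewrite -(addn1 m) iotaD count_cat.
    have -> : count (fun v => flab F' v == n.+1) (iota N.+1 m) = 0.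
      apply/eqP; rewrite -leqn0 leqNgt -has_count; apply/hasPn => v; rewrite mem_iota => /andP[vl vr].
      rewrite ext_lab_new; last lia.
      have -> : (v == (N + m).+1) = false by apply/negbTE; lia.
      have := hadv (j := v - N) (ltac:(lia)) => /adv_le; lia.
    rewrite /=.
    have -> : (N.+1 + m <= fsize F) = false by apply/negbTE; rewrite -/N; lia.
    have -> : (N.+1 + m == (N + m).+1) = true by apply/eqP; lia.
    by rewrite eqxx.
- move=> u v un vn hu hv luv.
  have [uN|uh] := ext_honest un hu; have [vN|vh] := ext_honest vn hv.
  + rewrite !ext_depth_old //; apply: F4 => //.
    * move: hu; rewrite ext_lab_old // honest_rcons //; exact: fork_lab_le fF uN.
    * move: hv; rewrite ext_lab_old // honest_rcons //; exact: fork_lab_le fF vN.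
    * by rewrite -!ext_lab_old.
  + rewrite vh ext_depth_h ext_depth_old // ltnS; exact: depth_le_height.
  + move: luv; rewrite uh ext_lab_new; last lia. rewrite eqxx => h.
    have := ext_lab_le vn; lia.
  + by move: luv; rewrite uh vh ltnn.
Qed.

Lemma ext_closed : closed_fork (rcons w false) F'.
Proof.
split; first exact: ext_fork.
move=> v vn lv; case: (leqP v N) => vN.
- case: (eqVneq v t) => [vt|vt].
    move: lv; rewrite /is_leaf => /hasPn /(_ N.+1).
    rewrite mem_vertices ext_size ext_par_new // eqxx vt eqxx /=; lia.
  have lF : is_leaf F v.
    apply/hasPn => c; rewrite mem_vertices => cn; apply/negP => /andP[c0 /eqP pc].
    move/hasPn: lv => /(_ c); rewrite mem_vertices ext_size ext_par_old // c0 pc eqxx /=.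
    move=> h; have : c <= (N + m).+1 by lia. by move/h.
  have := (proj2 cF) v vN lF; rewrite /honest_vertex ext_lab_old // honest_rcons //.
  exact: fork_lab_le fF vN.
- case: (eqVneq v (N + m).+1) => [->|vh].
    by rewrite /honest_vertex ext_lab_new ?eqxx ?honest_last ?orbT //; lia.
  move: lv; rewrite /is_leaf => /hasPn /(_ v.+1).
  rewrite mem_vertices ext_size ext_par_new; last lia.
  have -> : (v.+1 == N.+1) = false by apply/negbTE; lia.
  rewrite ext_size in vn.
  have vl : v < (N + m).+1 by move/eqP: vh; lia.
  by move/(_ vl); rewrite /= eqxx.
Qed.

Lemma ext_height : height F' = (height F).+1.
Proof.
apply/eqP; rewrite eqn_leq; apply/andP; split.
- apply/bigmax_leqP_seq => v; rewrite mem_vertices => vn _.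
  case: (leqP v N) => vN.
    rewrite ext_depth_old //; apply: leq_trans (depth_le_height vN) _; exact: leqnSn.
  have [e _] := ext_tine_new (j := v - N) (ltac:(rewrite ext_size in vn; lia)).
  have ev : v = N + (v - N) by lia.
  rewrite ev e -hm; rewrite ext_size in vn; lia.
- rewrite -ext_depth_h; apply: depth_le_height; by rewrite ext_size.
Qed.

Lemma ext_reach_old v : v <= N -> reach (rcons w false) F' v = (reach w F v - 1)%R.
Proof.
move=> vN; rewrite reach_rcons /= addr0 /reach /gap ext_height ext_depth_old //.
have -> : reserve w F' v = reserve w F v by rewrite /reserve ext_lab_old.
have := depth_le_height vN; lia.
Qed.

Lemma ext_reach_h : reach (rcons w false) F' (N + m).+1 = 0%R.
Proof.
rewrite reach_rcons /= addr0 /reach /gap ext_height ext_depth_h subnn.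
have -> : reserve w F' (N + m).+1 = 0.
  rewrite /reserve ext_lab_new ?eqxx; last lia.
  apply/eqP; rewrite -leqn0 leqNgt -has_count; apply/hasPn => i; rewrite mem_iota => /andP[_ il].
  apply/negP => /andP[_]; rewrite -/n; lia.
by [].
Qed.

Lemma ext_disjoint_old k s1 s2 : s1 <= N -> s2 <= N ->
  disjoint_over k F s1 s2 -> disjoint_over k F' s1 s2.
Proof.
move=> h1 h2 /disjointP H; apply/disjointP => u; rewrite !ext_tine_old // => u1 u2 u0.
rewrite ext_lab_old; [exact: H | exact: tine_le_fsize fF h1 u1].
Qed.

Lemma ext_disjoint_h k s : s <= N ->
  disjoint_over k F t s -> disjoint_over k F' (N + m).+1 s.
Proof.
move=> sN /disjointP H; apply/disjointP => u u1; rewrite ext_tine_old // => u2 u0.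
have uN := tine_le_fsize fF sN u2.
have [_ Hn] := ext_tine_new (j := m.+1) (ltac:(lia)).
rewrite addnS in Hn; have [|ut] := Hn u u1; first lia.
rewrite ext_lab_old //; exact: H.
Qed.

End Ext.
Lemma ext_exists w F t : closed_fork w F -> t <= fsize F -> (0 <= reach w F t)%R ->
  exists F', [/\ closed_fork (rcons w false) F', fsize F <= fsize F',
   (forall v, v <= fsize F -> reach (rcons w false) F' v = (reach w F v - 1)%R),
   (forall k s1 s2, s1 <= fsize F -> s2 <= fsize F ->
       disjoint_over k F s1 s2 -> disjoint_over k F' s1 s2) &
   exists h, [/\ h <= fsize F', reach (rcons w false) F' h = 0%R &
     forall k s, s <= fsize F -> disjoint_over k F t s -> disjoint_over k F' h s]].
Proof.
move=> cF tN r0.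
set L := [seq i <- iota 1 (size w) | adv_idx w i && (flab F t < i)].
set m := gap F t.
have sL : size L = reserve w F t by rewrite size_filter.
have mL : m <= size L.
  move: r0; rewrite sL /reach -/m subr_ge0 lez_nat; exact.

have hm : depth F t + m = height F by rewrite /m /gap subnKC //; apply: depth_le_height.
have srt : sorted ltn L by apply: sorted_filter; [exact: ltn_trans | exact: iota_ltn_sorted].
pose labs j := nth 0 L j.-1.
have inL : forall j, 0 < j <= m -> labs j \in L.
  move=> j hj; have hs : j.-1 < size L by lia.
  exact: mem_nth.
have hl1 : 0 < m -> flab F t < labs 1.
  move=> m0; have := inL 1 (ltac:(lia)); rewrite /L mem_filter => /andP[/andP[_ h] _]; exact: h.
have hinc : forall j, 0 < j < m -> labs j < labs j.+1.
  move=> j hj; rewrite /labs /=.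
  have h1 : j.-1 < size L by lia.
  have h2 : j < size L by lia.
  apply: (sorted_ltn_nth ltn_trans 0 srt); rewrite ?inE //; lia.
have hadv : forall j, 0 < j <= m -> adv_idx w (labs j).
  move=> j hj; have := inL j hj; rewrite /L mem_filter => /andP[/andP[h _] _]; exact: h.
exists (ext F t m labs (size w).+1); split.
- exact: ext_closed.
- by rewrite ext_size; lia.
- by move=> v vN; apply: ext_reach_old.
- by move=> k s1 s2 h1 h2; apply: ext_disjoint_old.
- exists (fsize F + m).+1; split=> //.
  + exact: ext_reach_h.
  + by move=> k s sN; apply: ext_disjoint_h.
Qed.
Definition rk (keep : pred nat) (v : nat) := count keep (iota 0 v).

Definition restrict (F : fork) (keep : pred nat) : fork :=
  Fork (size [seq v <- vertices F | keep v]).-1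
    (fun i => rk keep (fpar F (nth 0 [seq v <- vertices F | keep v] i)))
    (fun i => flab F (nth 0 [seq v <- vertices F | keep v] i)).

Section Restrict.
Variables (F : fork) (keep : pred nat).
Hypotheses (wfF : forall v, 0 < v <= fsize F -> fpar F v < v) (k0 : keep 0)
  (kpar : forall v, 0 < v <= fsize F -> keep v -> keep (fpar F v)).

Let N := fsize F.
Let S := [seq v <- vertices F | keep v].
Let sel i := nth 0 S i.
Let F' := restrict F keep.

Lemma rk_sel v : keep v -> v <= N -> rk keep v < size S /\ sel (rk keep v) = v.
Proof.
move=> kv vN.
have eS : S = [seq u <- iota 0 v | keep u] ++ v :: [seq u <- iota v.+1 (N - v) | keep u].
  rewrite /S /vertices (_ : (fsize F).+1 = v + (N - v).+1); last by rewrite /N; lia.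
  by rewrite iotaD filter_cat add0n /= kv.
have sz : size [seq u <- iota 0 v | keep u] = rk keep v by rewrite size_filter.
split.
- by rewrite eS size_cat /= sz; lia.
- by rewrite /sel eS nth_cat sz ltnn subnn.
Qed.

Lemma uniq_S : uniq S.
Proof. by apply: filter_uniq; apply: iota_uniq. Qed.

Lemma sel_spec i : i < size S -> [/\ keep (sel i), sel i <= N & rk keep (sel i) = i].
Proof.
move=> iS.
have : sel i \in S by apply: mem_nth.
rewrite mem_filter mem_vertices => /andP[ks sN]; split=> //.
have [r1 r2] := rk_sel ks sN.
apply/eqP; rewrite -(nth_uniq 0 r1 iS uniq_S); exact/eqP.
Qed.

Lemma rk_mono u v : u <= v -> rk keep u <= rk keep v.
Proof.
move=> uv; rewrite /rk (_ : v = u + (v - u)); last lia.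
by rewrite iotaD count_cat leq_addr.
Qed.

Lemma rk_lt u v : keep u -> u < v -> rk keep u < rk keep v.
Proof.
move=> ku uv; rewrite /rk (_ : v = u + (v - u)); last lia.
rewrite iotaD count_cat add0n (_ : v - u = (v - u).-1.+1); last lia.
by rewrite /= ku; lia.
Qed.

Lemma rk_inj u v : keep u -> keep v -> rk keep u = rk keep v -> u = v.
Proof.
move=> ku kv e; case: (ltngtP u v) => // h.
- by have := rk_lt ku h; rewrite e ltnn.
- by have := rk_lt kv h; rewrite e ltnn.
Qed.

Lemma rk0 : rk keep 0 = 0. Proof. by []. Qed.

Lemma size_S : 0 < size S.
Proof. by have [h _] := rk_sel k0 (leq0n _); apply: leq_ltn_trans h. Qed.

Lemma restrict_size : fsize F' = (size S).-1. Proof. by []. Qed.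

Lemma restrict_le i : (i <= fsize F') = (i < size S).
Proof. by rewrite restrict_size; have := size_S; case: (size S) => //= n _; rewrite ltnS. Qed.

Lemma restrict_lab i : flab F' i = flab F (sel i). Proof. by []. Qed.
Lemma restrict_par i : fpar F' i = rk keep (fpar F (sel i)). Proof. by []. Qed.

Lemma restrict_wf i : 0 < i <= fsize F' -> fpar F' i < i.
Proof.
move=> /andP[i0]; rewrite restrict_le => iS.
have [ks sN e] := sel_spec iS.
have s0 : 0 < sel i by rewrite lt0n; apply/eqP => h; move: i0; rewrite -e h rk0.
rewrite restrict_par -{2}e; apply: rk_lt; first by apply: kpar; rewrite ?s0.
by apply: wfF; rewrite s0.
Qed.

Lemma restrict_wfv i : i <= fsize F' -> wfv F' i.
Proof. move=> iN u /andP[u0 ui]; apply: restrict_wf; rewrite u0; exact: leq_trans ui iN. Qed.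

Lemma wfvF v : v <= N -> wfv F v.
Proof. move=> vN u /andP[u0 uv]; apply: wfF; rewrite u0; exact: leq_trans uv vN. Qed.

Lemma keep_tine v u : v <= N -> keep v -> u \in tine F v -> keep u.
Proof.
elim/ltn_ind: v => v IH vN kv; case: (posnP v) => [->|v0].
  by rewrite tine0 inE => /eqP->.
have pv : fpar F v < v by apply: wfF; rewrite v0.
rewrite (mem_tineS _ v0 (wfvF vN)) => /orP[/eqP->//|uin].
have kp : keep (fpar F v) by apply: kpar => //; rewrite v0.
exact: (IH (fpar F v) pv (ltnW (leq_trans pv vN)) kp uin).
Qed.

Lemma restrict_tine i : i < size S -> tine F' i = map (rk keep) (tine F (sel i)).
Proof.
elim/ltn_ind: i => i IH iS.
have [ks sN e] := sel_spec iS.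
case: (posnP i) => [i0|i0].
  subst i; have [_ s0] := rk_sel k0 (leq0n _); rewrite rk0 in s0.
  by rewrite s0 tine0 /= rk0.
have s0 : 0 < sel i by rewrite lt0n; apply/eqP => h; move: i0; rewrite -e h rk0.
have wi : wfv F' i by apply: restrict_wfv; rewrite restrict_le.
rewrite (tineS i0 wi) (tineS s0 (wfvF sN)) map_cons e; congr cons.
have pv : fpar F (sel i) < sel i by apply: wfF; rewrite s0.
have kp : keep (fpar F (sel i)) by apply: kpar; rewrite ?s0.
have [r1 r2] := rk_sel kp (ltnW (leq_trans pv sN)).
rewrite restrict_par IH ?r2 //.
rewrite -{2}e; exact: rk_lt.
Qed.

Lemma restrict_depth i : i < size S -> depth F' i = depth F (sel i).
Proof. by move=> iS; rewrite /depth restrict_tine // size_map. Qed.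

Lemma restrict_mem_tine v u : v <= N -> keep v -> u <= N -> keep u ->
  (rk keep u \in tine F' (rk keep v)) = (u \in tine F v).
Proof.
move=> vN kv uN ku; have [r1 r2] := rk_sel kv vN.
rewrite restrict_tine // r2; apply/mapP/idP => [[u' u'in e]|uin]; last by exists u.
have ku' := keep_tine vN kv u'in.
by rewrite (rk_inj ku ku' e).
Qed.

Lemma restrict_tine_inv v i : v <= N -> keep v -> i \in tine F' (rk keep v) ->
  exists2 u, u \in tine F v & i = rk keep u.
Proof.
move=> vN kv; have [r1 r2] := rk_sel kv vN.
by rewrite restrict_tine // r2 => /mapP.
Qed.

End Restrict.
Lemma lab_unique w G i u v : is_fork w G -> honest_idx w i -> u <= fsize G -> v <= fsize G ->
  flab G u = i -> flab G v = i -> u = v.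
Proof.
move=> [_ [_ _ _ F3 _]] hi uN vN lu lv.
have := F3 i hi; rewrite -size_filter.
have : uniq [seq x <- vertices G | flab G x == i] by apply: filter_uniq; apply: iota_uniq.
have ui : u \in [seq x <- vertices G | flab G x == i] by rewrite mem_filter lu eqxx mem_vertices.
have vi : v \in [seq x <- vertices G | flab G x == i] by rewrite mem_filter lv eqxx mem_vertices.
case: [seq x <- vertices G | flab G x == i] ui vi => [|a [|b s]] //=.
by rewrite !inE => /eqP-> /eqP->.
Qed.

Lemma count_le_in (s : seq nat) (a b : pred nat) :
  (forall x, x \in s -> a x -> b x) -> count a s <= count b s.
Proof.
elim: s => //= x s IH sub.
have h := IH (fun y ys => sub y (ltac:(by rewrite inE ys orbT))).
have : a x <= b x by case ax: (a x) => //=; rewrite (sub x) // inE eqxx.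
lia.
Qed.

Lemma count_lt (s : seq nat) (a b : pred nat) z :
  (forall x, x \in s -> a x -> b x) -> z \in s -> b z -> ~~ a z -> count a s < count b s.
Proof.
elim: s => // x s IH sub.
have sub' : forall y, y \in s -> a y -> b y by move=> y ys; apply: sub; rewrite inE ys orbT.
have abx : a x <= b x by case ax: (a x) => //=; rewrite (sub x) // inE eqxx.
rewrite inE => /orP[/eqP ezx|zs] bz naz /=.
- subst z; rewrite bz (negbTE naz) /= add0n add1n ltnS.
  exact: count_le_in.
- have h := IH sub' zs bz naz.
  lia.
Qed.

Lemma reach_adv w G v : is_fork w G -> 0 < v <= fsize G -> adv_idx w (flab G v) ->
  (reach w G v <= reach w G (fpar G v))%R.
Proof.
move=> fG /andP[v0 vN] adv.
have wv := fork_wfv fG vN.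
have pv : fpar G v < v by apply: (fork_par_lt fG); rewrite v0.
have [_ [_ F2 _ _ _]] := fG.
have lp : flab G (fpar G v) < flab G v by apply: F2; rewrite v0.
have dv := depthS v0 wv.
have dh := depth_le_height vN.
have rs : reserve w G v < reserve w G (fpar G v).
  rewrite /reserve; apply: (count_lt (z := flab G v)).
  - move=> x _ /andP[ax lx]; rewrite ax /=; lia.
  - rewrite mem_iota; have := adv_le adv; lia.
  - by rewrite adv lp.
  - by rewrite ltnn andbF.
rewrite /reach /gap; lia.
Qed.
Definition rhs (M R : int) : int :=
  if ((M < R)%R && (M == 0%R)) then 0%R else (M - 1)%R.

Lemma rhs_ge M R : (M - 1 <= rhs M R)%R.
Proof. rewrite /rhs; case: ifP => [/andP[_ /eqP->]|_] //. Qed.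

Lemma arith_b (a b M R mu rho : int) : (0 <= a)%R -> (Order.min a b <= mu)%R -> (mu <= M)%R ->
  (b <= rho)%R -> (rho <= R)%R -> (Order.min 0%R (b - 1) <= rhs M R)%R.
Proof.
move=> a0 h1 h2 h3 h4; rewrite /rhs.
case: (ltrP M R) => hMR /=; case: (eqVneq M 0%R) => hM0 /=.
- lia.
- move/eqP: hM0 => hM0; lia.
- lia.
- move/eqP: hM0 => hM0; lia.
Qed.
Section Upper.
Variables (w : charstring) (G : fork) (h : nat).
Hypotheses (cG : closed_fork (rcons w false) G) (hN : h <= fsize G)
  (lh : flab G h = (size w).+1).

Let n := size w.
Let w0 := rcons w false.
Let N := fsize G.
Let fG : is_fork w0 G := proj1 cG.
Let wfG : forall v, 0 < v <= fsize G -> fpar G v < v := proj1 fG.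

Definition ukeep : pred nat := fun v =>
  has (fun u => honest_vertex w0 G u && (u != h) && (v \in tine G u)) (vertices G).

Lemma ukeepP v : reflect (exists u, [/\ u <= N, honest_vertex w0 G u, u != h & v \in tine G u])
  (ukeep v).
Proof.
apply: (iffP hasP) => [[u]|[u [uN hu uh vu]]].
- by rewrite mem_vertices => uN /andP[/andP[hu uh] vu]; exists u.
- by exists u; rewrite ?mem_vertices // hu uh vu.
Qed.

Lemma h0 : h != 0.
Proof. have [_ [F1 _ _ _ _]] := fG. by apply/eqP => e; move: lh; rewrite e F1. Qed.

Lemma hl_honest : honest_idx w0 (flab G h).
Proof. by rewrite lh honest_last. Qed.

Lemma h_uniq v : v <= N -> flab G v = n.+1 -> v = h.
Proof.
move=> vN lv; have hi : honest_idx w0 n.+1 by rewrite /w0 /n honest_last.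
exact: (lab_unique fG hi vN hN lv lh).
Qed.

Lemma lab_le v : v <= N -> flab G v <= n.+1.
Proof. by move=> vN; have := fork_lab_le fG vN; rewrite size_rcons. Qed.

Lemma uk0 : ukeep 0.
Proof.
apply/ukeepP; exists 0; split; [done | done | by rewrite eq_sym h0 | done].
Qed.

Lemma ukpar v : 0 < v <= N -> ukeep v -> ukeep (fpar G v).
Proof.
move=> /andP[v0 vN] /ukeepP [u [uN hu uh vu]]; apply/ukeepP; exists u; split=> //.
apply: (tine_trans (fork_wfv fG uN) vu).
by rewrite (mem_tineS _ v0 (fork_wfv fG vN)) mem_tine_self ?orbT //; apply: wfv_par; last exact: fork_wfv fG vN.
Qed.

Lemma above v : v <= N -> exists u, [/\ u <= N, honest_vertex w0 G u & v \in tine G u].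
Proof.
move=> vN; have [u [uN lu vu]] := leaf_below fG vN.
by exists u; split=> //; apply: (proj2 cG).
Qed.

Lemma nkh : ~~ ukeep h.
Proof.
apply/negP => /ukeepP [u [uN hu uh hu']].
have := lab_tine fG uN hu' (ltac:(by rewrite eq_sym)).
have := lab_le uN; rewrite lh; lia.
Qed.

Lemma ukeep_lab v : v <= N -> ukeep v -> flab G v <= n.
Proof.
move=> vN kv; have := lab_le vN; rewrite leq_eqVlt => /orP[/eqP e|]; last by rewrite ltnS.
by move: kv; rewrite (h_uniq vN e) (negbTE nkh).
Qed.

Lemma depth_honest u : u <= N -> honest_vertex w0 G u -> u != h -> depth G u < depth G h.
Proof.
move=> uN; rewrite /honest_vertex => /orP[/eqP->|hu] uh.
  rewrite depth0 (depthS (v := h)) //; [by rewrite lt0n h0 | exact: fork_wfv fG hN].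
have [_ [_ _ _ _ F4]] := fG.
apply: F4 => //; first by rewrite lh honest_last.
rewrite lh ltn_neqAle lab_le // andbT.
by apply/eqP => e; move/eqP: uh; apply; apply: h_uniq.
Qed.

Lemma height_h : height G = depth G h.
Proof.
apply/eqP; rewrite eqn_leq depth_le_height // andbT.
apply/bigmax_leqP_seq => v; rewrite mem_vertices => vN _.
have [u [uN hu vu]] := above vN.
have [dle _] := depth_tine (fork_wfv fG uN) vu.
case: (eqVneq u h) => [<-//|uh].
exact: leq_trans dle (ltnW (depth_honest uN hu uh)).
Qed.

Lemma ukeep_depth v : v <= N -> ukeep v -> depth G v < depth G h.
Proof.
move=> vN /ukeepP [u [uN hu uh vu]].
have [dle _] := depth_tine (fork_wfv fG uN) vu.
exact: leq_ltn_trans dle (depth_honest uN hu uh).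
Qed.

Lemma removed_adv p : p <= N -> ~~ ukeep p -> p != h -> 0 < p /\ adv_idx w0 (flab G p).
Proof.
move=> pN kp ph.
have p0 : 0 < p by rewrite lt0n; apply: contraNneq kp => ->; exact: uk0.
split=> //.
have hp : ~~ honest_idx w0 (flab G p).
  apply: contra kp => hp; apply/ukeepP; exists p; split=> //.
  - by rewrite /honest_vertex hp orbT.
  - exact: mem_tine_self (fork_wfv fG pN).
have := lab_pos fG (v := p); rewrite p0 pN => /(_ isT) lp.
have := fork_lab_le fG pN => lw.
move: hp; rewrite /honest_idx /adv_idx lp lw /=; by case: nth.
Qed.

Lemma anc p : p <= N -> p != h ->
  exists t, [/\ ukeep t, t \in tine G p & (reach w0 G p <= reach w0 G t)%R].
Proof.
elim/ltn_ind: p => p IH pN ph.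
case kp: (ukeep p).
  by exists p; split=> //; exact: mem_tine_self (fork_wfv fG pN).
have [p0 adv] := removed_adv pN (negbT kp) ph.
have pp : fpar G p < p by apply: wfG; rewrite p0.
have rp := @reach_adv w0 G p fG (ltac:(by rewrite p0 pN)) adv.
have ppin : fpar G p \in tine G p.
  by rewrite (mem_tineS _ p0 (fork_wfv fG pN)) mem_tine_self ?orbT //; apply: wfv_par; last exact: fork_wfv fG pN.
have pph : fpar G p != h.
  apply/eqP => e; have [_ [_ F2 _ _ _]] := fG.
  have := F2 p (ltac:(by rewrite p0)); rewrite e lh; have := lab_le pN; lia.
have [t [kt tin rt]] := IH _ pp (ltnW (leq_trans pp pN)) pph.
exists t; split=> //.
- exact: tine_trans (fork_wfv fG pN) ppin tin.
- exact: le_trans rp rt.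
Qed.

Let Fr := restrict G ukeep.
Let S := [seq v <- vertices G | ukeep v].

Lemma sel_pos i : 0 < i -> i < size S -> 0 < nth 0 S i.
Proof.
move=> i0 iS; have [_ _ e] := sel_spec uk0 iS.
by rewrite lt0n; apply/eqP => z; move: i0; rewrite -e /= z.
Qed.

Lemma restrict_closed : closed_fork w Fr.
Proof.
have [_ [F1 F2 Fl F3 F4]] := fG.
have [r0 s0] := rk_sel uk0 uk0 (leq0n N).
have wfr := restrict_wf wfG uk0 ukpar.
have s0' : nth 0 S 0 = 0 := s0.
split; [split; [exact: wfr | split] | ].
- by rewrite restrict_lab s0' F1.
- move=> i /andP[i0]; rewrite (restrict_le G uk0) => iS.
  have [ks sN e] := sel_spec uk0 iS.
  have sp := sel_pos i0 iS.
  have sN2 : 0 < nth 0 S i <= N by rewrite sp; exact: sN.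
  have kp := ukpar sN2 ks.
  have pN : fpar G (nth 0 S i) <= N by have := wfG sN2; lia.
  have [_ e2] := rk_sel uk0 kp pN.
  rewrite restrict_lab restrict_par restrict_lab e2; exact: F2.
- move=> i; rewrite (restrict_le G uk0) => iS; have [ks sN _] := sel_spec uk0 iS.
  exact: ukeep_lab.
- move=> i hi.
  have -> : vertices Fr = iota 0 (size S).
    have := size_S G uk0; rewrite -/S => sz.
    by rewrite [vertices Fr]/vertices restrict_size prednK.
  have -> : count (fun j => flab Fr j == i) (iota 0 (size S)) =
            count (fun v => flab G v == i) (map (nth 0 S) (iota 0 (size S))) by rewrite count_map.
  rewrite (_ : [seq nth 0 S j | j <- iota 0 (size S)] = S); last exact: mkseq_nth.
  rewrite /S count_filter.
  have iN : i <= n by case/andP: (honest_le hi).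
  have hi0 : honest_idx w0 i by rewrite /w0 honest_rcons.
  rewrite -(F3 i hi0); apply: eq_in_count => v; rewrite mem_vertices => vN /=.
  case: (eqVneq (flab G v) i) => [lv|//].
  rewrite andTb; apply/ukeepP; exists v; split=> //.
  + by rewrite /honest_vertex lv hi0 orbT.
  + apply/eqP => vh; move: lv; rewrite vh lh => e; move: iN; rewrite -e; lia.
  + exact: mem_tine_self (fork_wfv fG vN).
- move=> u v; rewrite !(restrict_le G uk0) => uS vS hu hv luv.
  rewrite (restrict_depth wfG uk0 ukpar uS) (restrict_depth wfG uk0 ukpar vS).
  have [ku uN _] := sel_spec uk0 uS; have [kv vN _] := sel_spec uk0 vS.
  apply: F4 => //.
  + by rewrite /w0 honest_rcons // ukeep_lab.
  + by rewrite /w0 honest_rcons // ukeep_lab.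
- move=> i; rewrite (restrict_le G uk0) => iS li.
  have [ks sN e] := sel_spec uk0 iS.
  move/ukeepP: (ks) => [u [uN hu uh vu]].
  case: (eqVneq (nth 0 S i) u) => [su|ne].
    move: hu; rewrite /honest_vertex -su => /orP[/eqP z|hu].
      by apply/orP; left; rewrite -e /= z.
    apply/orP; right; rewrite restrict_lab /=.
    by move: hu; rewrite /w0 honest_rcons // ukeep_lab.
  have [c [cin c0 pc]] := tine_child (fork_wfv fG uN) vu ne.
  have cN : c <= N := tine_le_fsize fG uN cin.
  have kc : ukeep c by apply/ukeepP; exists u.
  have [rc sc] := rk_sel uk0 kc cN.
  exfalso; move/hasP: li; apply; exists (rk ukeep c).
    by rewrite mem_vertices (restrict_le G uk0).
  apply/andP; split; first exact: (rk_lt G uk0 uk0 c0).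
  by rewrite restrict_par sc pc e.
Qed.


Lemma tine_sub s t : s <= N -> t \in tine G s -> {subset tine G t <= tine G s}.
Proof. move=> sN ts x xt; exact: tine_trans (fork_wfv fG sN) ts xt. Qed.

Lemma height_Fr : height Fr < depth G h.
Proof.
have dp : 0 < depth G h by rewrite (depthS (v := h)) //; [by rewrite lt0n h0 | exact: fork_wfv fG hN].
suff : height Fr <= (depth G h).-1 by lia.
apply/bigmax_leqP_seq => i; rewrite mem_vertices (restrict_le G uk0) => iS _.
rewrite (restrict_depth wfG uk0 ukpar iS).
have [ks sN _] := sel_spec uk0 iS.
have := ukeep_depth sN ks; lia.
Qed.

Lemma ukeep_reach v : v <= N -> ukeep v ->
  rk ukeep v <= fsize Fr /\ (reach w0 G v <= reach w Fr (rk ukeep v) - 1)%R.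
Proof.
move=> vN kv; have [r1 r2] := rk_sel uk0 kv vN.
have rN : rk ukeep v <= fsize Fr by rewrite (restrict_le G uk0).
split=> //.
rewrite /w0 reach_rcons /= addr0.
have hr : reserve w Fr (rk ukeep v) = reserve w G v by rewrite /reserve restrict_lab r2.
have hd : depth Fr (rk ukeep v) = depth G v by rewrite (restrict_depth wfG uk0 ukpar r1) r2.
have := depth_le_height rN; have := height_Fr; rewrite hd.
rewrite /reach /gap hr hd height_h; lia.
Qed.

Lemma ukeep_disj k s1 s2 : s1 <= N -> s2 <= N -> ukeep s1 -> ukeep s2 ->
  disjoint_over k G s1 s2 -> disjoint_over k Fr (rk ukeep s1) (rk ukeep s2).
Proof.
move=> h1 h2 k1 k2 /disjointP H; apply/disjointP => u' u1 u2 u0.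
have [u uin e] := restrict_tine_inv wfG uk0 ukpar h1 k1 u1.
have uN : u <= N := tine_le_fsize fG h1 uin.
have ku : ukeep u := keep_tine wfG uk0 ukpar h1 k1 uin.
move: u2 u0; rewrite e (restrict_mem_tine wfG uk0 ukpar h2 k2 uN ku) => u2 u0.
have [_ ru] := rk_sel uk0 ku uN.
rewrite restrict_lab ru; apply: H => //.
by apply: contraNneq u0 => ->.
Qed.

Lemma reach_h : reach w0 G h = 0%R.
Proof.
rewrite /w0 reach_rcons /= addr0 /reach /gap height_h subnn.
have -> : reserve w G h = 0.
  rewrite /reserve lh; apply/eqP; rewrite -leqn0 leqNgt -has_count; apply/hasPn => i.
  rewrite mem_iota => /andP[_ il]; apply/negP => /andP[_]; lia.
by [].
Qed.

Lemma anchor_h : exists t, [/\ t <= N, ukeep t, t \in tine G h & (0 <= reach w Fr (rk ukeep t))%R].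
Proof.
have wh := fork_wfv fG hN.
have hp : 0 < h by rewrite lt0n h0.
set p := fpar G h.
have ph : p < h by apply: wfG; rewrite hp hN.
have pN : p <= N by apply: ltnW; exact: leq_trans ph hN.
have pin : p \in tine G h by rewrite (mem_tineS _ hp wh) mem_tine_self ?orbT //; exact: wfv_par.
have rp : (-1 <= reach w0 G p)%R.
  rewrite /reach /gap height_h (depthS hp wh) -/p.
  have -> : (depth G p).+1 - depth G p = 1 by lia.
  lia.
have : exists t, [/\ ukeep t, t \in tine G p & (reach w0 G p <= reach w0 G t)%R].
  case kp: (ukeep p).
    by exists p; split=> //; exact: mem_tine_self (fork_wfv fG pN).
  apply: anc => //.
  by apply/eqP => e; move: ph; rewrite e ltnn.
move=> [t [kt tin rt]].
have tN : t <= N := tine_le_fsize fG pN tin.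
exists t; split=> //; first exact: tine_sub hN pin _ tin.
have [_ rr] := ukeep_reach tN kt; lia.
Qed.

Lemma UB_rho R : (rho_fork w Fr <= R)%R ->
  forall v, v <= N -> (reach w0 G v <= 0)%R \/ (reach w0 G v <= R - 1)%R.
Proof.
move=> hR v vN; case: (eqVneq v h) => [->|vh]; first by left; rewrite reach_h.
right; have [t [kt tin rt]] := anc vN vh.
have tN : t <= N := tine_le_fsize fG vN tin.
have [rN rr] := ukeep_reach tN kt.
have [Hle _] := rho_fork_spec w Fr.
have := Hle _ rN; lia.
Qed.

Lemma UB_h k M R s : (muk k w Fr <= M)%R -> (rho_fork w Fr <= R)%R -> s <= N -> s != h ->
  disjoint_over k G h s ->
  (Order.min (reach w0 G h) (reach w0 G s) <= rhs M R)%R.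
Proof.
move=> hM hR sN sh dj.
have [t2 [k2 t2in r2]] := anc sN sh.
have t2N : t2 <= N := tine_le_fsize fG sN t2in.
have [t [tN kt tin rt]] := anchor_h.
have dj' : disjoint_over k G t t2.
  apply: (disjoint_sub (tine_sub hN tin)); rewrite disjoint_sym.
  apply: (disjoint_sub (tine_sub sN t2in)); by rewrite disjoint_sym.
have djF := ukeep_disj tN t2N kt k2 dj'.
have [rtN _] := ukeep_reach tN kt.
have [rt2N rr2] := ukeep_reach t2N k2.
have [Hmu _] := muk_spec k w Fr.
have [Hrho _] := rho_fork_spec w Fr.
have m1 := Hmu _ _ rtN rt2N djF.
have m2 := Hrho _ rt2N.
have := arith_b rt m1 hM m2 hR.
rewrite reach_h; lia.
Qed.

Lemma UB_mu k M R : k <= n -> (muk k w Fr <= M)%R -> (rho_fork w Fr <= R)%R ->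
  forall s1 s2, s1 <= N -> s2 <= N -> disjoint_over k G s1 s2 ->
  (Order.min (reach w0 G s1) (reach w0 G s2) <= rhs M R)%R.
Proof.
move=> kn hM hR s1 s2 h1 h2 dj.
case: (eqVneq s1 h) => [e1|n1]; case: (eqVneq s2 h) => [e2|n2].
- exfalso; move: dj; rewrite e1 e2 => dj; have hh := mem_tine_self (fork_wfv fG hN).
  move/disjointP: dj => /(_ h hh hh h0); rewrite lh; lia.
- rewrite e1 in dj *; exact: UB_h hM hR h2 n2 dj.
- rewrite e2 in dj *; rewrite minC; apply: UB_h hM hR h1 n1 _; by rewrite disjoint_sym.
- have [t1 [k1 t1in r1]] := anc h1 n1.
  have [t2 [k2 t2in r2]] := anc h2 n2.
  have t1N : t1 <= N := tine_le_fsize fG h1 t1in.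
  have t2N : t2 <= N := tine_le_fsize fG h2 t2in.
  have dj' : disjoint_over k G t1 t2.
    apply: (disjoint_sub (tine_sub h1 t1in)); rewrite disjoint_sym.
    apply: (disjoint_sub (tine_sub h2 t2in)); by rewrite disjoint_sym.
  have djF := ukeep_disj t1N t2N k1 k2 dj'.
  have [rt1N rr1] := ukeep_reach t1N k1.
  have [rt2N rr2] := ukeep_reach t2N k2.
  have [Hmu _] := muk_spec k w Fr.
  have m1 := Hmu _ _ rt1N rt2N djF.
  have := rhs_ge M R; lia.
Qed.

End Upper.
Lemma upper w G : closed_fork (rcons w false) G ->
  exists Fr, [/\ closed_fork w Fr,
    (forall R, (rho_fork w Fr <= R)%R -> forall v, v <= fsize G ->
        (reach (rcons w false) G v <= 0)%R \/ (reach (rcons w false) G v <= R - 1)%R) &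
    (forall k M R, k <= size w -> (muk k w Fr <= M)%R -> (rho_fork w Fr <= R)%R ->
      forall s1 s2, s1 <= fsize G -> s2 <= fsize G -> disjoint_over k G s1 s2 ->
      (Order.min (reach (rcons w false) G s1) (reach (rcons w false) G s2) <= rhs M R)%R)].
Proof.
move=> cG; have [_ [_ _ _ F3 _]] := proj1 cG.
have := F3 _ (honest_last w false) => c1.
have : has (fun v => flab G v == (size w).+1) (vertices G) by rewrite has_count c1.
move=> /hasP [h]; rewrite mem_vertices => hN /eqP lh.
exists (restrict G (ukeep w G h)); split.
- exact: (restrict_closed cG hN lh).
- move=> R hR; exact: (UB_rho cG hN lh hR).
- move=> k M R kn hM hR; exact: (UB_mu cG hN lh kn hM hR).
Qed.

Lemma rho_fork_upper w G R : closed_fork (rcons w false) G ->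
  (forall F, closed_fork w F -> (rho_fork w F <= R)%R) ->
  (rho_fork (rcons w false) G <= 0)%R \/ (rho_fork (rcons w false) G <= R - 1)%R.
Proof.
move=> cG HR; have [Fr [cFr H1 _]] := upper cG.
have [_ [v vN ->]] := rho_fork_spec (rcons w false) G.
exact: H1 (HR _ cFr) v vN.
Qed.

Lemma muk_upper w G k M R : closed_fork (rcons w false) G -> k <= size w ->
  (forall F, closed_fork w F -> (muk k w F <= M)%R) ->
  (forall F, closed_fork w F -> (rho_fork w F <= R)%R) ->
  (muk k (rcons w false) G <= rhs M R)%R.
Proof.
move=> cG kn HM HR; have [Fr [cFr _ H2]] := upper cG.
have [_ [s1 [s2 [h1 h2 h3 ->]]]] := muk_spec k (rcons w false) G.
exact: H2 kn (HM _ cFr) (HR _ cFr) s1 s2 h1 h2 h3.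
Qed.

Lemma deepest w F : closed_fork w F ->
  exists t, [/\ t <= fsize F, depth F t = height F & (0 <= reach w F t)%R].
Proof.
move=> cF; have [t tN e] := height_ex F.
by exists t; split=> //; rewrite /reach /gap e subnn.
Qed.

Lemma disj_split k F v s1 s2 :
  v <= fsize F -> s1 <= fsize F -> s2 <= fsize F ->
  (forall u, u <= fsize F -> wfv F u) ->
  disjoint_over k F s1 s2 -> disjoint_over k F v s1 \/ disjoint_over k F v s2.
Proof.
move=> vN h1 h2 wf dj.
case d1: (disjoint_over k F v s1); first by left.
case d2: (disjoint_over k F v s2); first by right.
exfalso.
move/negbFE/hasP: d1 => [u1 u1v /andP[/andP[u10 lu1] u1s]].
move/negbFE/hasP: d2 => [u2 u2v /andP[/andP[u20 lu2] u2s]].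
move/disjointP: dj => H.
have [a|a] := tine_prefix (wf v vN) u1v u2v.
- have := H u1 u1s (tine_trans (wf s2 h2) u2s a) u10; lia.
- have := H u2 (tine_trans (wf s1 h1) u1s a) u2s u20; lia.
Qed.
Definition F_empty := Fork 0 (fun _ => 0) (fun _ => 0).

Lemma empty_closed : closed_fork [::] F_empty.
Proof.
split; last by move=> v; rewrite leqn0 => /eqP->.
split; first by move=> v /andP[v0 vN]; move: v0 vN; case: v.
split=> //.
- by move=> v /andP[v0 vN]; move: v0 vN; case: v.
- by move=> i /andP[/andP[i0 i1] _]; move: i1 => /=; lia.
Qed.

Lemma shift_true w G : closed_fork w G -> forall v, v <= fsize G ->
  reach (rcons w true) G v = (reach w G v + 1)%R.
Proof. by move=> cG v vN; rewrite reach_rcons (fork_lab_le (proj1 cG) vN). Qed.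

Lemma exists_closed w : exists F, closed_fork w F.
Proof.
elim/last_ind: w => [|w b [F cF]]; first by exists F_empty; exact: empty_closed.
case: b; first by exists F; apply/closed_true.
have [t [tN _ rt]] := deepest cF.
have [G [cG _ _ _ _]] := ext_exists cF tN rt.
by exists G.
Qed.

Lemma muk_rho k w F : is_fork w F -> size w <= k -> muk k w F = rho_fork w F.
Proof.
move=> fF kw; have [Hle [v vN e]] := rho_fork_spec w F.
apply: imax_eq.
- exists v, v; split=> //; last by rewrite e minxx.
  apply/disjointP => u u1 _ _; apply: leq_trans kw.
  exact: fork_lab_le fF (tine_le_fsize fF vN u1).
- move=> s [v1 [v2 [h1 h2 _ ->]]]; have := Hle v1 h1; lia.
Qed.

Lemma mu_forkE' x y b G : mu_fork x (rcons y b) G = muk (size x) (rcons (x ++ y) b) G.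
Proof. by rewrite mu_forkE rcons_cat. Qed.

Lemma closedE x y b G : closed_fork (x ++ rcons y b) G <-> closed_fork (rcons (x ++ y) b) G.
Proof. by rewrite rcons_cat. Qed.

Definition Qy (x y : charstring) := exists2 F, closed_fork (x ++ y) F &
  rho_fork (x ++ y) F = rho (x ++ y) /\ mu_fork x y F = mu x y.

Lemma step_true x y : Qy x y -> mu x (rcons y true) = (mu x y + 1)%R /\ Qy x (rcons y true).
Proof.
move=> [F cF [er em]].
have cF' : closed_fork (rcons (x ++ y) true) F by apply/closed_true.
have rF := rho_fork_shift (shift_true cF).
have mF := muk_shift (size x) (shift_true cF).
have [Rle _] := rho_spec cF.
have [Mle _] := mu_spec cF.
have erho : rho (x ++ rcons y true) = rho_fork (x ++ rcons y true) F.
  rewrite -rcons_cat; apply: imax_eq; first by exists F.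
  move=> s [G cG ->]; have cG' : closed_fork (x ++ y) G by apply/closed_true.
  rewrite (rho_fork_shift (shift_true cG')) rF er; have := Rle G cG'; lia.
have emu : mu x (rcons y true) = mu_fork x (rcons y true) F.
  apply: imax_eq; first by exists F => //; apply/closedE.
  move=> s [G /closedE cG ->]; have cG' : closed_fork (x ++ y) G by apply/closed_true.
  rewrite !mu_forkE' (muk_shift _ (shift_true cG')) mF.
  have := Mle G cG'; rewrite !mu_forkE in em *; lia.
split.
- by rewrite emu mu_forkE' mF -mu_forkE em.
- exists F; first by apply/closedE.
  split=> //.
Qed.
Lemma construct w F t k : closed_fork w F -> t <= fsize F -> (0 <= reach w F t)%R ->
  exists G, [/\ closed_fork (rcons w false) G, (0 <= rho_fork (rcons w false) G)%R,
   (rho_fork w F - 1 <= rho_fork (rcons w false) G)%R,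
   (muk k w F - 1 <= muk k (rcons w false) G)%R &
   forall s, s <= fsize F -> disjoint_over k F t s -> (1 <= reach w F s)%R ->
     (0 <= muk k (rcons w false) G)%R].
Proof.
move=> cF tN rt.
have [G [cG szG rold dold [h [hN rh dh]]]] := ext_exists cF tN rt.
have [Hr _] := rho_fork_spec (rcons w false) G.
have [Hm _] := muk_spec k (rcons w false) G.
exists G; split=> //.
- by rewrite -rh; apply: Hr.
- have [_ [v vN ->]] := rho_fork_spec w F.
  rewrite -rold //; apply: Hr; exact: leq_trans szG.
- have [_ [s1 [s2 [h1 h2 h3 ->]]]] := muk_spec k w F.
  have := Hm s1 s2 (leq_trans h1 szG) (leq_trans h2 szG) (dold k s1 s2 h1 h2 h3).
  rewrite !rold //; lia.
- move=> s sN ds r1.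
  have := Hm h s hN (leq_trans sN szG) (dh k s sN ds).
  rewrite rh rold //; lia.
Qed.

Lemma step_false x y : Qy x y ->
  mu x (rcons y false) = rhs (mu x y) (rho (x ++ y)) /\ Qy x (rcons y false).
Proof.
move=> [F cF [er em]].
have [Rle _] := rho_spec cF.
have [Mle _] := mu_spec cF.
have kn : size x <= size (x ++ y) by rewrite size_cat leq_addr.
have mk : muk (size x) (x ++ y) F = mu x y by rewrite -em.
have : exists G, [/\ closed_fork (rcons (x ++ y) false) G,
     (0 <= rho_fork (rcons (x ++ y) false) G)%R,
     (rho (x ++ y) - 1 <= rho_fork (rcons (x ++ y) false) G)%R &
     (rhs (mu x y) (rho (x ++ y)) <= muk (size x) (rcons (x ++ y) false) G)%R].
  have [_ [s1 [s2 [h1 h2 h3 e12]]]] := muk_spec (size x) (x ++ y) F.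
  have [_ [v vN ev]] := rho_fork_spec (x ++ y) F.
  rewrite /rhs; case c: ((mu x y < rho (x ++ y))%R && (mu x y == 0%R)).
  + move/andP: c => [lt /eqP m0].
    have rv1 : (1 <= reach (x ++ y) F v)%R by rewrite -ev er; lia.
    have [d|d] := disj_split vN h1 h2 (fun u uN => fork_wfv (proj1 cF) uN) h3.
    * have rs : (0 <= reach (x ++ y) F s1)%R by move: e12; rewrite mk m0; lia.
      have [G [cG r0 r1 _ m1]] := construct (size x) cF h1 rs.
      exists G; split=> //; first by rewrite -er.
      by apply: (m1 v vN) => //; rewrite disjoint_sym.
    * have rs : (0 <= reach (x ++ y) F s2)%R by move: e12; rewrite mk m0; lia.
      have [G [cG r0 r1 _ m1]] := construct (size x) cF h2 rs.
      exists G; split=> //; first by rewrite -er.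
      by apply: (m1 v vN) => //; rewrite disjoint_sym.
  + have [t [tN _ rt]] := deepest cF.
    have [G [cG r0 r1 m1 _]] := construct (size x) cF tN rt.
    by exists G; split=> //; rewrite -?er -?mk.
move=> [G [cG r0 r1 m1]].
have Mle' : forall G', closed_fork (x ++ y) G' -> (muk (size x) (x ++ y) G' <= mu x y)%R.
  by move=> G' cG'; rewrite -mu_forkE; apply: Mle.
have mG := muk_upper cG kn Mle' Rle.
have emu : mu x (rcons y false) = mu_fork x (rcons y false) G.
  apply: imax_eq; first by exists G => //; apply/closedE.
  move=> s [G' /closedE cG' ->]; rewrite !mu_forkE'.
  have := muk_upper cG' kn Mle' Rle; lia.
have erho : rho (x ++ rcons y false) = rho_fork (x ++ rcons y false) G.
  rewrite -rcons_cat; apply: imax_eq; first by exists G.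
  move=> s [G' cG' ->]; have := rho_fork_upper cG' Rle; lia.
split.
- rewrite emu mu_forkE'; apply/eqP; rewrite eq_le mG m1 //.
- exists G; first by apply/closedE.
  split=> //.
Qed.

Theorem lemma3_aux (x : charstring) :
  mu x [::] = rho x /\
  (forall y : charstring, x ++ y != [::] ->
     [/\ mu x (rcons y true) = (mu x y + 1)%R,
         mu x (rcons y false) =
           (if ((mu x y < rho (x ++ y))%R && (mu x y == 0%R)) then 0%R
            else (mu x y - 1)%R)
       & exists2 F, closed_fork (x ++ y) F &
           rho_fork (x ++ y) F = rho (x ++ y) /\ mu_fork x y F = mu x y]).
Proof.
have [F0 cF0] := exists_closed x.
have [_ [F cF eF]] := rho_spec cF0.
have cF' : closed_fork (x ++ [::]) F by rewrite cats0.
have mr : forall G, closed_fork (x ++ [::]) G -> mu_fork x [::] G = rho_fork x G.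
  move=> G; rewrite cats0 => cG; rewrite mu_forkE cats0; apply: muk_rho (proj1 cG) _; exact: leqnn.
have [Rle _] := rho_spec cF0.
have emu : mu x [::] = rho x.
  apply: imax_eq; first by exists F => //; rewrite mr // eF.
  move=> s [G cG ->]; rewrite mr //; apply: Rle; by rewrite cats0 in cG.
have Q0 : Qy x [::].
  exists F => //; rewrite cats0 mr // emu; split=> //.
have Qall : forall y, Qy x y.
  elim/last_ind => [//|y b IH].
  by case: b; [exact: (step_true IH).2 | exact: (step_false IH).2].
split=> // y _.
have [e1 _] := step_true (Qall y).
have [e2 _] := step_false (Qall y).
split=> //; exact: Qall y.
Qed.

Unset Implicit Arguments.

Theorem lemma3 (x : charstring) :
  mu x [::] = rho x /\
  (forall y : charstring, x ++ y != [::] ->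
     [/\ mu x (rcons y true) = (mu x y + 1)%R,
         mu x (rcons y false) =
           (if ((mu x y < rho (x ++ y))%R && (mu x y == 0%R)) then 0%R
            else (mu x y - 1)%R)
       & exists2 F, closed_fork (x ++ y) F &
           rho_fork (x ++ y) F = rho (x ++ y) /\ mu_fork x y F = mu x y]).
Proof. exact: lemma3_aux. Qed.
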